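(* Let $a\in(0,1)$, $k\in(1,\infty)$ and $r,s\in(1,\infty)$. Then (1) $\pi_{rs}\le\sqrt{\pi_{r^2}\pi_{s^2}}\le\sqrt{\pi_r\pi_s}$; (2) $\pi_{r^as^{1-a}}\le a\,\pi_r+(1-a)\,\pi_s$; (3) if moreover $r\le s$, then $\left(\frac{\pi_s}{\pi_r}\right)^k\le\frac{\pi_{s^k}}{\pi_{r^k}}$.
   Context: For $p>1$, $\pi_p=\frac{2\pi}{p\sin(\pi/p)}$. *)

(* Defs.v *)
From Stdlib Require Import Reals.
Open Scope R_scope.

(* pi_p = 2 pi / (p sin(pi/p)), intended for p > 1. *)
Definition pi_p (p : R) : R := 2 * PI / (p * sin (PI / p)).

(* Main.v *)
Require Import Defs.
From Stdlib Require Import Reals Lra.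
From Coquelicot Require Import Coquelicot.
Open Scope R_scope.
Definition sl (f : R -> R) a b := (f b - f a) / (b - a).

Section Gen.
Variables (f df : R -> R) (lo : R).
Hypothesis Hd : forall x, lo < x -> is_derive f x (df x).
Hypothesis Hm : forall x y, lo < x -> x <= y -> df x <= df y.

Lemma mvt_lo a b : lo < a < b -> exists c, a <= c <= b /\ f b - f a = df c * (b - a).
Proof.
  intros [Ha Hb].
  destruct (MVT_gen f a b df) as [c [Hc E]].
  - intros x Hx. apply Hd. rewrite Rmin_left in Hx by lra. lra.
  - intros x Hx. rewrite Rmin_left in Hx by lra. apply continuity_pt_filterlim.
    apply (ex_derive_continuous (K:=R_AbsRing) (V:=R_NormedModule)). eexists. apply Hd. lra.
  - rewrite Rmin_left in Hc by lra. rewrite Rmax_right in Hc by lra.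
    exists c. split; auto.
Qed.

Lemma three a b c : lo < a < b -> b < c -> sl f a b <= sl f b c.
Proof.
  intros H1 H2. destruct (mvt_lo a b H1) as [c1 [Hc1 E1]].
  destruct (mvt_lo b c ltac:(lra)) as [c2 [Hc2 E2]].
  unfold sl. rewrite E1, E2. unfold Rdiv.
  rewrite !Rmult_assoc, !Rinv_r by lra. rewrite !Rmult_1_r. apply Hm; lra.
Qed.

Lemma sl_ac a b c : lo < a < b -> b < c -> sl f a b <= sl f a c /\ sl f a c <= sl f b c.
Proof.
  intros H1 H2. pose proof (three a b c H1 H2) as T.
  assert (E : sl f a c = ((b - a) * sl f a b + (c - b) * sl f b c) / (c - a)).
  { unfold sl. field. lra. }
  rewrite E. set (u := sl f a b) in *. set (v := sl f b c) in *.
  split.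
  - apply Rmult_le_reg_r with (c - a). lra.
    unfold Rdiv. rewrite Rmult_assoc, Rinv_l by lra. nra.
  - apply Rmult_le_reg_r with (c - a). lra.
    unfold Rdiv. rewrite Rmult_assoc, Rinv_l by lra. nra.
Qed.

Lemma four a b c d : lo < a -> a < b -> c < d -> a <= c -> b <= d -> sl f a b <= sl f c d.
Proof.
  intros Ha Hab Hcd Hac Hbd.
  assert (S1 : sl f a b <= sl f a d).
  { destruct (Req_dec b d) as [->|Hne]. lra. apply (sl_ac a b d); lra. }
  assert (S2 : sl f a d <= sl f c d).
  { destruct (Req_dec a c) as [->|Hne]. lra. apply (sl_ac a c d); lra. }
  lra.
Qed.

Lemma convex x y t : lo < x -> lo < y -> 0 < t < 1 ->
  f (t * x + (1 - t) * y) <= t * f x + (1 - t) * f y.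
Proof.
  intros Hx Hy Ht.
  destruct (Rtotal_order x y) as [Hxy|[<-|Hxy]].
  - set (m := t * x + (1 - t) * y).
    assert (Q1 : x < m). { unfold m. assert (0 < (1-t)*(y-x)) by (apply Rmult_lt_0_compat; lra). lra. }
    assert (Q2 : m < y). { unfold m. assert (0 < t*(y-x)) by (apply Rmult_lt_0_compat; lra). lra. }
    pose proof (three x m y ltac:(lra) Q2) as T.
    unfold sl in T.
    replace (m - x) with ((1-t)*(y-x)) in T by (unfold m; ring).
    replace (y - m) with (t*(y-x)) in T by (unfold m; ring).
    assert (P: 0 < y - x) by lra.
    apply Rmult_le_compat_r with (r := (t * (1-t) * (y-x))) in T; [|apply Rlt_le; repeat apply Rmult_lt_0_compat; lra].
    replace ((f m - f x) / ((1 - t) * (y - x)) * (t * (1 - t) * (y - x)))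
      with (t * (f m - f x)) in T by (field; lra).
    replace ((f y - f m) / (t * (y - x)) * (t * (1 - t) * (y - x)))
      with ((1-t) * (f y - f m)) in T by (field; lra).
    lra.
  - replace (t * x + (1 - t) * x) with x by ring. lra.
  - set (m := t * x + (1 - t) * y).
    assert (Q1 : y < m). { unfold m. assert (0 < t*(x-y)) by (apply Rmult_lt_0_compat; lra). lra. }
    assert (Q2 : m < x). { unfold m. assert (0 < (1-t)*(x-y)) by (apply Rmult_lt_0_compat; lra). lra. }
    pose proof (three y m x ltac:(lra) Q2) as T.
    unfold sl in T.
    replace (m - y) with (t*(x-y)) in T by (unfold m; ring).
    replace (x - m) with ((1-t)*(x-y)) in T by (unfold m; ring).
    assert (P: 0 < x - y) by lra.
    apply Rmult_le_compat_r with (r := (t * (1-t) * (x-y))) in T; [|apply Rlt_le; repeat apply Rmult_lt_0_compat; lra].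
    replace ((f m - f y) / (t * (x - y)) * (t * (1 - t) * (x - y)))
      with ((1-t) * (f m - f y)) in T by (field; lra).
    replace ((f x - f m) / ((1 - t) * (x - y)) * (t * (1 - t) * (x - y)))
      with (t * (f x - f m)) in T by (field; lra).
    lra.
Qed.
End Gen.

Definition H x := ln (pi_p (exp x)).
Definition g t := t * cos t / sin t.
Definition dH x := -1 + g (PI / exp x).

Lemma exp_le a b : a <= b -> exp a <= exp b.
Proof. intros [h | ->]. left; apply exp_increasing; auto. lra. Qed.

Lemma exp_gt1 z : 0 < z -> 1 < exp z.
Proof. intros; rewrite <- exp_0; apply exp_increasing; auto. Qed.

Lemma t_range z : 0 < z -> 0 < PI / exp z < PI.
Proof.
  intros Hz. pose proof (exp_gt1 z Hz). pose proof PI_RGT_0.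
  split. apply Rdiv_lt_0_compat; lra.
  apply Rmult_lt_reg_r with (exp z). lra. unfold Rdiv. rewrite Rmult_assoc, Rinv_l by lra. nra.
Qed.

Lemma pi_pos z : 0 < z -> 0 < pi_p (exp z).
Proof.
  intros Hz. pose proof (t_range z Hz). pose proof (exp_gt1 z Hz). pose proof PI_RGT_0.
  assert (0 < sin (PI / exp z)) by (apply sin_gt_0; lra).
  unfold pi_p. apply Rdiv_lt_0_compat. lra. apply Rmult_lt_0_compat; lra.
Qed.

Lemma pi_H z : 0 < z -> pi_p (exp z) = exp (H z).
Proof. intros Hz. unfold H. rewrite exp_ln; auto. apply pi_pos; auto. Qed.

Lemma dHd x : 0 < x -> is_derive H x (dH x).
Proof.
  intros Hx. pose proof (t_range x Hx). pose proof (exp_gt1 x Hx).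
  assert (0 < sin (PI / exp x)) by (apply sin_gt_0; lra).
  pose proof (pi_pos x Hx). pose proof PI_RGT_0.
  unfold H, pi_p, dH, g. auto_derive.
  - unfold pi_p in *. unfold Rdiv in *. repeat split; try lra. apply Rgt_not_eq. apply Rmult_lt_0_compat; lra.
  - unfold Rdiv in *. field. repeat split; lra.
Qed.

Lemma dg t : 0 < t < PI -> is_derive g t ((cos t * sin t - t) / (sin t)^2).
Proof. intros Ht. assert (0 < sin t) by (apply sin_gt_0; lra).
  unfold g. auto_derive. lra.
  assert (E : (cos t * sin t - t) / sin t ^ 2 = (cos t * sin t - t * (sin t ^ 2 + cos t ^ 2)) / sin t ^ 2).
  { pose proof (sin2_cos2 t) as S. unfold Rsqr in S. f_equal. replace (sin t ^ 2 + cos t ^ 2) with 1 by (rewrite <- S; ring). ring. }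
  rewrite E. field. lra.
Qed.

Lemma g_decr t1 t2 : 0 < t1 -> t1 <= t2 -> t2 < PI -> g t2 <= g t1.
Proof.
  intros H1 H2 H3. destruct H2 as [H2 | ->]; [|lra].
  destruct (MVT_gen g t1 t2 (fun t => (cos t * sin t - t) / (sin t)^2)) as [c [Hc E]].
  - intros x Hx. rewrite Rmin_left in Hx by lra. rewrite Rmax_right in Hx by lra. apply dg. lra.
  - intros x Hx. rewrite Rmin_left in Hx by lra. rewrite Rmax_right in Hx by lra.
    apply continuity_pt_filterlim.
    apply (ex_derive_continuous (K:=R_AbsRing) (V:=R_NormedModule)). eexists. apply dg. lra.
  - rewrite Rmin_left in Hc by lra. rewrite Rmax_right in Hc by lra.
    assert (Hs : 0 < sin c) by (apply sin_gt_0; lra).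
    assert (Hn : cos c * sin c - c <= 0).
    { pose proof (sin_lt_x c ltac:(lra)). pose proof (COS_bound c). nra. }
    assert ((cos c * sin c - c) / sin c ^ 2 <= 0).
    { unfold Rdiv. apply Rmult_le_0_r. lra. left. apply Rinv_0_lt_compat. nra. }
    assert (0 < t2 - t1) by lra. nra.
Qed.

Lemma dH_mono x y : 0 < x -> x <= y -> dH x <= dH y.
Proof.
  intros Hx Hxy. unfold dH. pose proof (t_range x Hx). pose proof (t_range y ltac:(lra)).
  assert (PI / exp y <= PI / exp x).
  { pose proof (exp_le _ _ Hxy). pose proof (exp_gt1 x Hx). pose proof PI_RGT_0.
    unfold Rdiv. apply Rmult_le_compat_l. lra. apply Rinv_le_contravar; lra. }
  pose proof (g_decr (PI / exp y) (PI / exp x)). lra.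
Qed.

Lemma k_pos t : 0 < t < PI -> t * cos t <= sin t.
Proof.
  intros Ht.
  destruct (MVT_gen (fun u => sin u - u * cos u) 0 t (fun u => u * sin u)) as [c [Hc E]].
  - intros x _. auto_derive. auto. ring.
  - intros x _. apply continuity_pt_filterlim.
    apply (ex_derive_continuous (K:=R_AbsRing) (V:=R_NormedModule) (fun u => sin u - u * cos u)). auto_derive. auto.
  - rewrite Rmin_left in Hc by lra. rewrite Rmax_right in Hc by lra.
    rewrite sin_0, cos_0 in E.
    assert (0 <= sin c) by (apply sin_ge_0; lra). assert (0 <= c * sin c) by (apply Rmult_le_pos; lra). assert (0 <= c * sin c * (t - 0)) by (apply Rmult_le_pos; lra). lra.
Qed.

Lemma dH_nonpos x : 0 < x -> dH x <= 0.
Proof.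
  intros Hx. pose proof (t_range x Hx). unfold dH, g.
  set (t := PI / exp x) in *.
  assert (0 < sin t) by (apply sin_gt_0; lra).
  pose proof (k_pos t H0).
  assert (t * cos t / sin t <= 1).
  { apply Rmult_le_reg_r with (sin t). lra. unfold Rdiv. rewrite Rmult_assoc, Rinv_l by lra. lra. }
  lra.
Qed.

Lemma H_decr x y : 0 < x -> x <= y -> H y <= H x.
Proof.
  intros Hx [Hxy | ->]; [|lra].
  destruct (mvt_lo H dH 0 dHd x y ltac:(lra)) as [c [Hc E]].
  pose proof (dH_nonpos c ltac:(lra)). nra.
Qed.

Theorem lemma3p6 (a k r s : R) :
  0 < a < 1 -> 1 < k -> 1 < r -> 1 < s ->
  (pi_p (r * s) <= sqrt (pi_p (r ^ 2) * pi_p (s ^ 2))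
   /\ sqrt (pi_p (r ^ 2) * pi_p (s ^ 2)) <= sqrt (pi_p r * pi_p s))
  /\ pi_p (Rpower r a * Rpower s (1 - a)) <= a * pi_p r + (1 - a) * pi_p s
  /\ (r <= s -> Rpower (pi_p s / pi_p r) k <= pi_p (Rpower s k) / pi_p (Rpower r k)).
Proof.
  intros Ha Hk Hr Hs.
  set (x := ln r). set (y := ln s).
  assert (Hx : 0 < x) by (unfold x; rewrite <- ln_1; apply ln_increasing; lra).
  assert (Hy : 0 < y) by (unfold y; rewrite <- ln_1; apply ln_increasing; lra).
  assert (Er : r = exp x) by (unfold x; rewrite exp_ln; lra).
  assert (Es : s = exp y) by (unfold y; rewrite exp_ln; lra).
  clearbody x y. subst r s.
  pose proof (convex H dH 0 dHd dH_mono) as CH.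
  split; [split|split].
  - replace (exp x * exp y) with (exp (1/2 * (2*x) + (1 - 1/2) * (2*y))).
    2:{ rewrite <- exp_plus. f_equal. field. }
    replace (exp x ^ 2) with (exp (2*x)) by (replace (2*x) with (x+x) by ring; rewrite exp_plus; ring).
    replace (exp y ^ 2) with (exp (2*y)) by (replace (2*y) with (y+y) by ring; rewrite exp_plus; ring).
    rewrite !pi_H by lra.
    rewrite <- exp_plus.
    replace (H (2*x) + H (2*y)) with (2 * ((H (2*x) + H (2*y))/2)) by field.
    replace (exp (2 * ((H (2 * x) + H (2 * y)) / 2))) with (Rsqr (exp ((H (2 * x) + H (2 * y)) / 2))).
    2:{ unfold Rsqr. rewrite <- exp_plus. f_equal. ring. }
    rewrite sqrt_Rsqr by (left; apply exp_pos).
    apply exp_le. pose proof (CH (2*x) (2*y) (1/2) ltac:(lra) ltac:(lra) ltac:(lra)). lra.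
  - apply sqrt_le_1_alt.
    replace (exp x ^ 2) with (exp (2*x)) by (replace (2*x) with (x+x) by ring; rewrite exp_plus; ring).
    replace (exp y ^ 2) with (exp (2*y)) by (replace (2*y) with (y+y) by ring; rewrite exp_plus; ring).
    rewrite !pi_H by lra.
    pose proof (exp_le _ _ (H_decr x (2*x) Hx ltac:(lra))).
    pose proof (exp_le _ _ (H_decr y (2*y) Hy ltac:(lra))).
    pose proof (exp_pos (H (2*x))). pose proof (exp_pos (H (2*y))).
    apply Rmult_le_compat; lra.
  - unfold Rpower. rewrite !ln_exp. rewrite <- exp_plus.
    replace (a * x + (1 - a) * y) with (a * x + (1 - a) * y) by ring.
    rewrite !pi_H by (try lra; nra).
    apply Rle_trans with (exp (a * H x + (1 - a) * H y)).
    + apply exp_le. apply CH; lra.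
    + set (lo := Rmin (H x) (H y) - 1).
      apply (convex exp exp lo (fun z _ => is_derive_exp z) (fun u v _ h => exp_le u v h));
        unfold lo; [pose proof (Rmin_l (H x) (H y)) | pose proof (Rmin_r (H x) (H y)) | ]; lra.
  - intros Hle. unfold Rpower. rewrite !ln_exp. rewrite !pi_H by nra.
    replace (exp (H y) / exp (H x)) with (exp (H y - H x)).
    2:{ unfold Rminus, Rdiv. rewrite exp_plus, exp_Ropp. reflexivity. }
    replace (exp (H (k*y)) / exp (H (k*x))) with (exp (H (k*y) - H (k*x))).
    2:{ unfold Rminus, Rdiv. rewrite exp_plus, exp_Ropp. reflexivity. }
    rewrite ln_exp. apply exp_le.
    assert (Hxy : x <= y) by (destruct (Rle_lt_dec x y); auto; pose proof (exp_increasing _ _ r); lra).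
    destruct Hxy as [Hxy | <-]; [|lra].
    pose proof (four H dH 0 dHd dH_mono x y (k*x) (k*y) Hx Hxy ltac:(nra) ltac:(nra) ltac:(nra)) as F.
    unfold sl in F.
    replace (k * y - k * x) with (k * (y - x)) in F by ring.
    apply Rmult_le_compat_r with (r := k * (y - x)) in F; [|nra].
    replace ((H y - H x) / (y - x) * (k * (y - x))) with (k * (H y - H x)) in F by (field; lra).
    replace ((H (k * y) - H (k * x)) / (k * (y - x)) * (k * (y - x))) with (H (k * y) - H (k * x)) in F by (field; lra).
    lra.
Qed.
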